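(* Assume that $0<h<1$, that $2/h$ is not an integer, and that $$\lim_{\beta\to\infty}|\Lambda_{L_\beta}|^{1/2}\big\{e^{-[(n_0+1)h-2]\beta}+e^{-h\beta}\big\}=0\quad\text{and}\quad\lim_{\beta\to\infty}|\Lambda_{L_\beta}|^{2}e^{-(2-h)\beta}=0.$$ Then $$\lim_{\beta\to\infty}\frac{\mathrm{cap}(\mathbf{-1},\mathbf{+1})}{\mathrm{cap}(\mathbf{-1},\{\mathbf 0,\mathbf{+1}\})}=1.$$
   Context: Blume–Capel model. Fix $h\in(0,2)$, $n_0=\lfloor 2/h\rfloor$. For each $\beta>0$, $L=L_\beta$ is a positive integer (with $L_\beta\ge n_0(n_0+1)+2$), $\Lambda_L$ the two-dimensional discrete torus of side $L$, $\Omega_L=\{-1,0,1\}^{\Lambda_L}$. Hamiltonian $\mathbb H(\sigma)=\sum(\sigma(y)-\sigma(x))^2-h\sum_x\sigma(x)$, first sum over unordered nearest-neighbour pairs. $\sigma^{x,\pm}$: replace $\sigma(x)$ by $\sigma(x)\pm1$ modulo $3$ in $\{-1,0,1\}$. $(\sigma_t)$ jumps from $\sigma$ to $\sigma^{x,\pm}$ at rate $R_\beta(\sigma,\sigma^{x,\pm})=\exp\{-\beta[\mathbb H(\sigma^{x,\pm})-\mathbb H(\sigma)]_+\}$; $\mathbb P_\sigma$ its law. $\mu_\beta(\sigma)=Z_\beta^{-1}e^{-\beta\mathbb H(\sigma)}$, $\lambda_\beta(\sigma)=\sum_{\sigma'}R_\beta(\sigma,\sigma')$, $H_A=\inf\{t>0:\sigma_t\in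 A\}$, $H_A^+=\inf\{t>T_1:\sigma_t\in A\}$ ($T_1$ first jump time). For disjoint $A,B$, $\mathrm{cap}(A,B)=\sum_{\sigma\in A}\mu_\beta(\sigma)\lambda_\beta(\sigma)\mathbb P_\sigma[H_B<H_A^+]$ (a single configuration stands for the singleton). $\mathbf{-1},\mathbf 0,\mathbf{+1}$ are the constant configurations. *)

(* Defs.v *)
From Stdlib Require Import Reals Classical ClassicalEpsilon.
From mathcomp Require Import all_boot.
Set Implicit Arguments. Unset Strict Implicit. Unset Printing Implicit Defensive.

Open Scope R_scope.

Notation "\rsum_ ( i : T ) F" := (\big[Rplus/R0]_(i : T) F)
  (at level 41, F at level 41, i, T at level 50) : R_scope.
Notation "\rsum_ ( i | P ) F" := (\big[Rplus/R0]_(i | P) F)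
  (at level 41, F at level 41, i at level 50) : R_scope.

(* limit of a real sequence (0 if it does not converge) *)
Definition lim_seq (u : nat -> R) : R :=
  match excluded_middle_informative (exists l, Un_cv u l) with
  | left H => proj1_sig (constructive_indefinite_description _ H)
  | right _ => 0
  end.

Definition lim_infty (f : R -> R) (l : R) : Prop :=
  forall eps, 0 < eps -> exists M, forall b, M < b -> Rabs (f b - l) < eps.

(* spins {-1,0,1} encoded by 'I_3 : value i - 1 *)
Definition spin (i : 'I_3) : R := INR (nat_of_ord i) - 1.
Definition s_minus : 'I_3 := @Ordinal 3 0 isT.
Definition s_zero  : 'I_3 := @Ordinal 3 1 isT.
Definition s_plus  : 'I_3 := @Ordinal 3 2 isT.

(* torus Lambda_L = (Z/LZ)^2, configurations Omega_L *)
Definition site (L : nat) := ('I_L * 'I_L)%type.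
Definition conf (L : nat) := {ffun site L -> 'I_3}.

Definition right_nb L (x : site L) : site L := (ordS x.1, x.2).
Definition up_nb L (x : site L) : site L := (x.1, ordS x.2).

Definition const_conf L (c : 'I_3) : conf L := [ffun _ => c].
Definition minus_conf L := const_conf L s_minus.
Definition zero_conf L := const_conf L s_zero.
Definition plus_conf L := const_conf L s_plus.

(* Hamiltonian: each unordered nearest-neighbour pair {x, x+e_i} counted once
   (valid since L >= 3) *)
Definition Ham (h : R) L (s : conf L) : R :=
  \rsum_(x : site L)
     ((spin (s (right_nb x)) - spin (s x))^2 + (spin (s (up_nb x)) - spin (s x))^2)
  - h * \rsum_(x : site L) spin (s x).

Definition flip L (s : conf L) (x : site L) (pl : bool) : conf L :=
  [ffun y => if y == x then (if pl then ordS (s x) else ord_pred (s x)) else s y].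

Definition rate (h beta : R) L (s s' : conf L) : R :=
  exp (- beta * Rmax 0 (Ham h s' - Ham h s)).

Definition lam (h beta : R) L (s : conf L) : R :=
  \rsum_(x : site L) (rate h beta s (flip s x true) + rate h beta s (flip s x false)).

Definition Zpart (h beta : R) L : R := \rsum_(s : conf L) exp (- beta * Ham h s).
Definition mu (h beta : R) L (s : conf L) : R := exp (- beta * Ham h s) / Zpart h beta L.

(* expectation of g(next state) for the embedded jump chain started at s *)
Definition jump_avg (h beta : R) L (s : conf L) (g : conf L -> R) : R :=
  \rsum_(x : site L)
    (rate h beta s (flip s x true) / lam h beta s * g (flip s x true)
     + rate h beta s (flip s x false) / lam h beta s * g (flip s x false)).

(* reach h beta A B n eta = probability, for the jump chain started at eta,
   that B is visited before A within the first n visited states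
   (eta itself counted as the first visited state) *)
Fixpoint reach (h beta : R) L (A B : pred (conf L)) (n : nat) (eta : conf L) : R :=
  match n with
  | O => 0
  | S n' => if B eta then 1 else if A eta then 0
            else jump_avg h beta eta (reach h beta A B n')
  end.

(* P_sigma[H_B < H_A^+] : after the first jump, B is hit before A *)
Definition escape (h beta : R) L (A B : pred (conf L)) (s : conf L) : R :=
  lim_seq (fun n => jump_avg h beta s (reach h beta A B n)).

Definition cap (h beta : R) L (A B : pred (conf L)) : R :=
  \rsum_(s | A s) (mu h beta s * lam h beta s * escape h beta A B s).

(* Main.v *)
Require Import Defs.
From Stdlib Require Import Reals.
From mathcomp Require Import all_boot.
Open Scope R_scope.
From HB Require Import structures.
From Stdlib Require Import Lra ClassicalEpsilon Classical.
From mathcomp Require Import zify.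
Set Implicit Arguments. Unset Strict Implicit. Unset Printing Implicit Defensive.


Lemma Rplus_assoc' : associative Rplus.
Proof. move=> a b c; lra. Qed.
HB.instance Definition _ := Monoid.isComLaw.Build R R0 Rplus Rplus_assoc' Rplus_comm Rplus_0_l.

Lemma rsum_le (I : Type) (r : seq I) (F G : I -> R) :
  (forall i, F i <= G i) ->
  \big[Rplus/R0]_(i <- r) F i <= \big[Rplus/R0]_(i <- r) G i.
Proof.
move=> H; elim: r => [|a r IH]; rewrite ?big_nil ?big_cons; first lra.
have := H a; lra.
Qed.

Lemma rsum_ge0 (I : Type) (r : seq I) (F : I -> R) :
  (forall i, 0 <= F i) -> 0 <= \big[Rplus/R0]_(i <- r) F i.
Proof.
move=> H; elim: r => [|a r IH]; rewrite ?big_nil ?big_cons; first lra.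
have := H a; lra.
Qed.

Lemma rsum_plus (I : Type) (r : seq I) (F G : I -> R) :
  \big[Rplus/R0]_(i <- r) (F i + G i) =
  \big[Rplus/R0]_(i <- r) F i + \big[Rplus/R0]_(i <- r) G i.
Proof.
elim: r => [|a r IH]; rewrite ?big_nil ?big_cons; first lra.
rewrite IH; lra.
Qed.

Lemma rsum_scal (I : Type) (r : seq I) (c : R) (F : I -> R) :
  \big[Rplus/R0]_(i <- r) (c * F i) = c * \big[Rplus/R0]_(i <- r) F i.
Proof.
elim: r => [|a r IH]; rewrite ?big_nil ?big_cons; first lra.
rewrite IH; lra.
Qed.

Lemma rsum_cv (I : Type) (r : seq I) (F : I -> nat -> R) (l : I -> R) :
  (forall i, Un_cv (F i) (l i)) ->
  Un_cv (fun n => \big[Rplus/R0]_(i <- r) F i n) (\big[Rplus/R0]_(i <- r) l i).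
Proof.
move=> H; elim: r => [|a r IH].
  rewrite big_nil. have -> : (fun n => \big[Rplus/R0]_(i <- [::]) F i n) = (fun _ => 0).
    by apply: FunctionalExtensionality.functional_extensionality => n; rewrite big_nil.
  by move=> e He; exists 0%nat => n _; rewrite /R_dist Rminus_0_r Rabs_R0.
rewrite big_cons.
have -> : (fun n => \big[Rplus/R0]_(i <- a :: r) F i n) =
          (fun n => F a n + \big[Rplus/R0]_(i <- r) F i n).
  by apply: FunctionalExtensionality.functional_extensionality => n; rewrite big_cons.
exact: CV_plus.
Qed.

Lemma rsum_ge_term (I : finType) (F : I -> R) (j : I) :
  (forall i, 0 <= F i) -> F j <= \big[Rplus/R0]_(i : I) F i.
Proof.
move=> H; rewrite (bigD1 j) //=.
have : 0 <= \big[Rplus/R0]_(i | i != j) F i.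
  rewrite big_mkcond /=; apply: rsum_ge0 => i; case: ifP => _; [exact: H|lra].
lra.
Qed.

Lemma iter_Rplus n c : iter n (Rplus c) 0 = INR n * c.
Proof. elim: n => [|n IH]; first by rewrite /=; lra. rewrite [iter _ _ _]/= IH S_INR; lra. Qed.

Lemma rsum_const (I : finType) (c : R) :
  \big[Rplus/R0]_(i : I) c = INR #|I| * c.
Proof.
have := big_const R0 Rplus (pred_of_simpl (@predT I)) c.
rewrite iter_Rplus => <-. by [].
Qed.

Lemma exp_INR_mult n x : exp (INR n * x) = exp x ^ n.
Proof.
elim: n => [|n IH]; first by rewrite /= Rmult_0_l exp_0.
rewrite S_INR Rmult_plus_distr_r Rmult_1_l exp_plus IH /=; lra.
Qed.


Definition wt h beta L (s : conf L) (x : site L) pl :=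
  rate h beta s (flip s x pl) / lam h beta s.

Lemma rate_pos h beta L (s s' : conf L) : 0 < rate h beta s s'.
Proof. exact: exp_pos. Qed.

Definition site0 L (HL : (0 < L)%N) : site L := (Ordinal HL, Ordinal HL).

Lemma lam_pos h beta L (HL : (0 < L)%N) (s : conf L) : 0 < lam h beta s.
Proof.

pose F := fun x => rate h beta s (flip s x true) + rate h beta s (flip s x false).
have HF : forall x, 0 < F x.
  by move=> x; rewrite /F; have := rate_pos h beta s (flip s x true);
     have := rate_pos h beta s (flip s x false); lra.
exact: (Rlt_le_trans _ _ _ (HF (site0 HL)) (@rsum_ge_term _ F (site0 HL) (fun i => Rlt_le _ _ (HF i)))).
Qed.

Lemma wt_pos h beta L (HL : (0 < L)%N) (s : conf L) x pl : 0 < wt h beta s x pl.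
Proof. rewrite /wt; apply: Rdiv_lt_0_compat; [exact: rate_pos | exact: lam_pos]. Qed.

Lemma J_def h beta L (s : conf L) g :
  jump_avg h beta s g = \rsum_(x : site L) (wt h beta s x true * g (flip s x true)
                                          + wt h beta s x false * g (flip s x false)).
Proof. by []. Qed.

Lemma J_le h beta L (HL : (0 < L)%N) (s : conf L) g g' :
  (forall z, g z <= g' z) -> jump_avg h beta s g <= jump_avg h beta s g'.
Proof.
move=> H; rewrite !J_def; apply: rsum_le => x.
have := wt_pos h beta HL s x true; have := wt_pos h beta HL s x false.
have := H (flip s x true); have := H (flip s x false).
move=> *; apply: Rplus_le_compat; apply: Rmult_le_compat_l; lra.
Qed.

Lemma J_plus h beta L (s : conf L) g g' :
  jump_avg h beta s (fun z => g z + g' z) = jump_avg h beta s g + jump_avg h beta s g'.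
Proof.
rewrite !J_def -rsum_plus; apply: eq_bigr => x _; lra.
Qed.

Lemma J_scal h beta L (s : conf L) c g :
  jump_avg h beta s (fun z => c * g z) = c * jump_avg h beta s g.
Proof.
rewrite !J_def -rsum_scal; apply: eq_bigr => x _; lra.
Qed.

Lemma J_const h beta L (HL : (0 < L)%N) (s : conf L) c :
  jump_avg h beta s (fun _ => c) = c.
Proof.
rewrite J_def.
have Hl := lam_pos h beta HL s.
transitivity (\rsum_(x : site L) ((c / lam h beta s) *
   (rate h beta s (flip s x true) + rate h beta s (flip s x false)))).
  apply: eq_bigr => x _; rewrite /wt /Rdiv; lra.
rewrite rsum_scal -/(lam h beta s); field; lra.
Qed.

Lemma J_ge_term h beta L (HL : (0 < L)%N) (s : conf L) g x pl :
  (forall z, 0 <= g z) -> wt h beta s x pl * g (flip s x pl) <= jump_avg h beta s g.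
Proof.
move=> H; rewrite J_def.
have Ht : forall x pl, 0 <= wt h beta s x pl * g (flip s x pl).
  move=> y b; apply: Rmult_le_pos; [exact: Rlt_le (wt_pos _ _ HL _ _ _)| exact: H].
pose F := fun x => wt h beta s x true * g (flip s x true) + wt h beta s x false * g (flip s x false).
have HF : forall i, 0 <= F i by move=> i; rewrite /F; have := Ht i true; have := Ht i false; lra.
have H2 := @rsum_ge_term _ F x HF.
apply: (Rle_trans _ (F x)); last exact: H2.
by rewrite /F; case: pl; have := Ht x true; have := Ht x false; lra.
Qed.

Lemma J_ge0 h beta L (HL : (0 < L)%N) (s : conf L) g :
  (forall z, 0 <= g z) -> 0 <= jump_avg h beta s g.
Proof.
move=> H; apply: Rle_trans _ (@J_le h beta L HL s (fun _ => 0) g H); rewrite J_const //; lra.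
Qed.

Lemma J_le1 h beta L (HL : (0 < L)%N) (s : conf L) g :
  (forall z, g z <= 1) -> jump_avg h beta s g <= 1.
Proof.
move=> H; apply: Rle_trans (@J_le h beta L HL s g (fun _ => 1) H) _; rewrite J_const //; lra.
Qed.

Lemma reach_bounds h beta L (HL : (0 < L)%N) (A B : pred (conf L)) n s :
  0 <= reach h beta A B n s <= 1.
Proof.
elim: n s => [|n IH] s /=; first lra.
case: (B s); first lra. case: (A s); first lra.
split; [apply: J_ge0 => // z; case: (IH z) | apply: J_le1 => // z; case: (IH z)]; lra.
Qed.

Lemma reach_mono h beta L (HL : (0 < L)%N) (A B : pred (conf L)) n s :
  reach h beta A B n s <= reach h beta A B n.+1 s.
Proof.
elim: n s => [|n IH] s.
  by have := reach_bounds h beta HL A B 1 s; simpl; lra.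
rewrite [reach _ _ _ _ n.+1 s]/= [reach _ _ _ _ n.+2 s]/=.
case: (B s); first lra. case: (A s); first lra.
exact: J_le.
Qed.

Lemma reach_mono_le h beta L (HL : (0 < L)%N) (A B : pred (conf L)) n m s :
  (n <= m)%N -> reach h beta A B n s <= reach h beta A B m s.
Proof.
move=> /subnKC <-; elim: (m - n)%N => [|k IH]; first by rewrite addn0; lra.
rewrite addnS; apply: Rle_trans IH (reach_mono _ _ _ _ _ _ _) => //.
Qed.


Lemma cv_const c : Un_cv (fun _ => c) c.
Proof. by move=> e He; exists 0%nat => n _; rewrite /R_dist Rminus_diag Rabs_R0. Qed.

Lemma cv_shift u l : Un_cv u l -> Un_cv (fun n => u (S n)) l.
Proof. move=> H e He; case: (H e He) => N HN; exists N => n Hn; apply: HN; lia. Qed.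

Lemma lim_seq_eq u l : Un_cv u l -> lim_seq u = l.
Proof.
move=> H; rewrite /lim_seq; case: excluded_middle_informative => [E|N].
  case: (constructive_indefinite_description _ E) => l' Hl' /=.
  exact: UL_sequence Hl' H.
by exfalso; apply: N; exists l.
Qed.

Lemma grow_cv (u : nat -> R) (K : R) :
  (forall n, u n <= u (S n)) -> (forall n, u n <= K) -> Un_cv u (lim_seq u).
Proof.
move=> Hg Hb.
have Hub : has_ub u by exists K => x [n ->]; exact: Hb.
have [l Hl] := growing_cv u Hg Hub.
by rewrite (lim_seq_eq Hl).
Qed.

Lemma cv_le_bound u l K : Un_cv u l -> (forall n, u n <= K) -> l <= K.
Proof. move=> H Hb; exact: (@Rle_cv_lim u (fun _ => K) l K Hb H (cv_const K)). Qed.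

Lemma cv_ge_bound u l K : Un_cv u l -> (forall n, K <= u n) -> K <= l.
Proof. move=> H Hb; exact: (@Rle_cv_lim (fun _ => K) u K l Hb (cv_const K) H). Qed.

Lemma J_cv h beta L (s : conf L) (g : nat -> conf L -> R) (gl : conf L -> R) :
  (forall z, Un_cv (fun n => g n z) (gl z)) ->
  Un_cv (fun n => jump_avg h beta s (g n)) (jump_avg h beta s gl).
Proof.
move=> H.
have := @rsum_cv _ (index_enum (Datatypes_prod__canonical__fintype_Finite
        (fintype_ordinal__canonical__fintype_Finite L)
        (fintype_ordinal__canonical__fintype_Finite L)))
  (fun x n => wt h beta s x true * g n (flip s x true) + wt h beta s x false * g n (flip s x false))
  (fun x => wt h beta s x true * gl (flip s x true) + wt h beta s x false * gl (flip s x false)).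
apply => x.
apply: CV_plus; apply: CV_mult; [exact: cv_const | exact: H | exact: cv_const | exact: H].
Qed.

Definition phi h beta L (A B : pred (conf L)) (s : conf L) :=
  lim_seq (fun n => reach h beta A B n s).

Lemma phi_cv h beta L (HL : (0 < L)%N) (A B : pred (conf L)) s :
  Un_cv (fun n => reach h beta A B n s) (phi h beta A B s).
Proof.
rewrite /phi; apply: (@grow_cv _ 1) => n; first exact: reach_mono.
by case: (reach_bounds h beta HL A B n s).
Qed.

Lemma phi_ge h beta L (HL : (0 < L)%N) (A B : pred (conf L)) n s :
  reach h beta A B n s <= phi h beta A B s.
Proof.
apply: (@growing_ineq (fun n => reach h beta A B n s)); last exact: phi_cv.
move=> k; exact: reach_mono.
Qed.

Lemma phi_bounds h beta L (HL : (0 < L)%N) (A B : pred (conf L)) s :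
  0 <= phi h beta A B s <= 1.
Proof.
split; first by apply: Rle_trans (phi_ge h beta HL A B 0 s); simpl; lra.
apply: cv_le_bound (phi_cv h beta HL A B s) _ => n.
by case: (reach_bounds h beta HL A B n s).
Qed.

Lemma phi_B h beta L (HL : (0 < L)%N) (A B : pred (conf L)) s :
  B s -> phi h beta A B s = 1.
Proof.
move=> Hs; have := phi_ge h beta HL A B 1 s; rewrite /= Hs.
have := phi_bounds h beta HL A B s; lra.
Qed.

Lemma phi_A h beta L (HL : (0 < L)%N) (A B : pred (conf L)) s :
  ~~ B s -> A s -> phi h beta A B s = 0.
Proof.
move=> HB HA; have := phi_bounds h beta HL A B s.
have : phi h beta A B s <= 0.
  apply: cv_le_bound (phi_cv h beta HL A B s) _ => n.
  by case: n => [|n] /=; [lra | rewrite (negbTE HB) HA; lra].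
lra.
Qed.

Lemma phi_harm h beta L (HL : (0 < L)%N) (A B : pred (conf L)) s :
  ~~ B s -> ~~ A s -> phi h beta A B s = jump_avg h beta s (phi h beta A B).
Proof.
move=> HB HA.
have H1 := cv_shift (phi_cv h beta HL A B s).
have H2 := @J_cv h beta L s (fun n => reach h beta A B n) (phi h beta A B)
             (fun z => phi_cv h beta HL A B z).
apply: UL_sequence H1 _.
move=> e He; case: (H2 e He) => N HN; exists N => n Hn.
by rewrite /= (negbTE HB) (negbTE HA); apply: HN.
Qed.


Lemma exp_le x y : x <= y -> exp x <= exp y.
Proof. move=> H; case: (Rle_lt_or_eq_dec _ _ H) => [H'|->]; [exact: Rlt_le (exp_increasing _ _ H')|lra]. Qed.

Definition Cd h beta L (s s' : conf L) := exp (- beta * Ham h s) * rate h beta s s'.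

Lemma Cd_eq h beta L (s s' : conf L) :
  Cd h beta s s' = exp (- beta * Rmax (Ham h s) (Ham h s')).
Proof.
rewrite /Cd /rate -exp_plus; congr exp.
rewrite /Rmax; case: Rle_dec; case: Rle_dec => *; lra.
Qed.

Lemma Cd_sym h beta L (s s' : conf L) : Cd h beta s s' = Cd h beta s' s.
Proof. by rewrite !Cd_eq Rmax_comm. Qed.

Lemma Cd_pos h beta L (s s' : conf L) : 0 < Cd h beta s s'.
Proof. rewrite Cd_eq; exact: exp_pos. Qed.

Lemma flipK L (s : conf L) x b : flip (flip s x b) x (~~ b) = s.
Proof.
apply/ffunP => y; rewrite /flip !ffunE; case: eqP => [->|//].
by rewrite ?eqxx; case: b => /=; [rewrite ordSK | rewrite ord_predK].
Qed.

Definition S3 L (F : conf L -> site L -> bool -> R) :=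
  \rsum_(s : conf L) \rsum_(x : site L) (F s x true + F s x false).

Lemma S3_pair L (F : conf L -> site L -> bool -> R) :
  S3 F = \big[Rplus/R0]_(p : conf L * (site L * bool)) F p.1 p.2.1 p.2.2.
Proof.
rewrite /S3 -(@pair_bigA _ R0 Rplus _ _ (fun (s : conf L) (q : site L * bool) => F s q.1 q.2)).
apply: eq_bigr => s _.
rewrite -(@pair_bigA _ R0 Rplus _ _ (fun (x : site L) (b : bool) => F s x b)).
apply: eq_bigr => x _.
by rewrite big_bool.
Qed.

Definition iota3 L (p : conf L * (site L * bool)) : conf L * (site L * bool) :=
  (flip p.1 p.2.1 p.2.2, (p.2.1, ~~ p.2.2)).

Lemma iota3K L : involutive (@iota3 L).
Proof. by case=> s [x b]; rewrite /iota3 /= flipK negbK. Qed.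

Lemma S3_swap L (F : conf L -> site L -> bool -> R) :
  S3 F = S3 (fun s x b => F (flip s x b) x (~~ b)).
Proof.
rewrite !S3_pair (reindex_inj (inv_inj (@iota3K L))) /=.
by [].
Qed.

Lemma S3_plus L (F G : conf L -> site L -> bool -> R) :
  S3 (fun s x b => F s x b + G s x b) = S3 F + S3 G.
Proof.
rewrite /S3 -rsum_plus; apply: eq_bigr => s _; rewrite -rsum_plus; apply: eq_bigr => x _; lra.
Qed.

Lemma S3_scal L c (F : conf L -> site L -> bool -> R) :
  S3 (fun s x b => c * F s x b) = c * S3 F.
Proof.
rewrite /S3 -rsum_scal; apply: eq_bigr => s _; rewrite -rsum_scal; apply: eq_bigr => x _; lra.
Qed.

Definition flux h beta L (g : conf L -> R) (s : conf L) :=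
  \rsum_(x : site L) (Cd h beta s (flip s x true) * (g s - g (flip s x true))
                    + Cd h beta s (flip s x false) * (g s - g (flip s x false))).

Definition Dir h beta L (g : conf L -> R) :=
  S3 (fun s x b => Cd h beta s (flip s x b) * (g s - g (flip s x b)) ^ 2).

Lemma Dir_identity h beta L (g : conf L -> R) :
  Dir h beta g = 2 * \rsum_(s : conf L) (g s * flux h beta g s).
Proof.
pose T := fun (s : conf L) x b => Cd h beta s (flip s x b) * (g s - g (flip s x b)).
have E1 : \rsum_(s : conf L) (g s * flux h beta g s) = S3 (fun s x b => T s x b * g s).
  rewrite /S3; apply: eq_bigr => s _; rewrite /flux -rsum_scal; apply: eq_bigr => x _.
  rewrite /T; lra.
have E2 : S3 (fun s x b => T s x b * g (flip s x b)) = - S3 (fun s x b => T s x b * g s).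
  rewrite S3_swap; transitivity (S3 (fun s x b => (-1) * (T s x b * g s)));
    last by rewrite S3_scal; lra.
  rewrite /S3; apply: eq_bigr => s _; apply: eq_bigr => x _.
  rewrite /T !flipK /= !(Cd_sym h beta (flip s x _) s); lra.
have E3 : Dir h beta g = S3 (fun s x b => T s x b * g s) +
                        (-1) * S3 (fun s x b => T s x b * g (flip s x b)).
  rewrite -S3_scal -S3_plus /Dir /S3; apply: eq_bigr => s _; apply: eq_bigr => x _.
  rewrite /T; lra.
rewrite E3 E2 E1; lra.
Qed.

Lemma Dir_ge_term h beta L (g : conf L -> R) s x b :
  Cd h beta s (flip s x b) * (g s - g (flip s x b)) ^ 2 <= Dir h beta g.
Proof.
have Hn : forall s x b, 0 <= Cd h beta s (flip s x b) * (g s - g (flip s x b)) ^ 2.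
  move=> s' x' b'; apply: Rmult_le_pos; [exact: Rlt_le (Cd_pos _ _ _ _) | exact: pow2_ge_0].
pose F := fun s' x' => Cd h beta s' (flip s' x' true) * (g s' - g (flip s' x' true)) ^ 2
                     + Cd h beta s' (flip s' x' false) * (g s' - g (flip s' x' false)) ^ 2.
have HF : forall s' x', 0 <= F s' x' by move=> s' x'; rewrite /F; have := Hn s' x' true; have := Hn s' x' false; lra.
have H1 := @rsum_ge_term _ (F s) x (HF s).
have H2 := @rsum_ge_term _ (fun s' => \rsum_(x' : site L) F s' x') s
              (fun s' => rsum_ge0 _ (HF s')).
apply: (Rle_trans _ (F s x)).
  by rewrite /F; case: b; have := Hn s x true; have := Hn s x false; lra.
apply: (Rle_trans _ _ _ H1); exact: H2.
Qed.


Lemma rsum_site_const L c : \rsum_(x : site L) c = INR (L * L) * c.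
Proof. by rewrite rsum_const card_prod card_ord. Qed.

Lemma rsum_conf_const L c : \rsum_(x : conf L) c = INR (3 ^ (L * L)) * c.
Proof. by rewrite rsum_const card_ffun card_prod !card_ord. Qed.

Lemma flux_harm h beta L (HL : (0 < L)%N) (g : conf L -> R) s :
  g s = jump_avg h beta s g -> flux h beta g s = 0.
Proof.
move=> Hg.
have Hl := lam_pos h beta HL s.
pose e := exp (- beta * Ham h s).
transitivity (\rsum_(x : site L) (e * g s * (rate h beta s (flip s x true) + rate h beta s (flip s x false))
   + (- (e * lam h beta s)) * (wt h beta s x true * g (flip s x true)
                               + wt h beta s x false * g (flip s x false)))).
  apply: eq_bigr => x _; rewrite /Cd /wt -/e; field; lra.
rewrite rsum_plus rsum_scal rsum_scal -J_def -/(lam h beta s) -Hg; ring.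
Qed.

Lemma Cd_le h beta L (s s' : conf L) : 0 <= beta -> Cd h beta s s' <= exp (- beta * Ham h s).
Proof.
move=> Hb; rewrite Cd_eq; apply: exp_le.
have := Rmax_l (Ham h s) (Ham h s'); nra.
Qed.

Lemma flux_le h beta L (g : conf L -> R) s :
  0 <= beta -> (forall z, 0 <= g z) -> g s = 1 ->
  flux h beta g s <= INR (L * L) * (2 * exp (- beta * Ham h s)).
Proof.
move=> Hb Hg0 Hs; rewrite /flux -rsum_site_const; apply: rsum_le => x.
have := Cd_le h s (flip s x true) Hb; have := Cd_le h s (flip s x false) Hb.
have := Cd_pos h beta s (flip s x true); have := Cd_pos h beta s (flip s x false).
have := Hg0 (flip s x true); have := Hg0 (flip s x false).
rewrite Hs => *; nra.
Qed.

Lemma Dir_upper h beta L (HL : (0 < L)%N) (g : conf L -> R) (Sb : pred (conf L)) (p : conf L) c :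
  0 <= beta ->
  (forall z, 0 <= g z <= 1) ->
  (forall z, Sb z -> g z = 1 /\ c < Ham h z) ->
  g p = 0 ->
  (forall z, ~~ Sb z -> z != p -> g z = jump_avg h beta z g) ->
  Dir h beta g <= 2 * (INR (3 ^ (L * L)) * (INR (L * L) * (2 * exp (- beta * c)))).
Proof.
move=> Hb Hg HS Hp Hh.
rewrite Dir_identity; apply: Rmult_le_compat_l; first lra.
rewrite -rsum_conf_const; apply: rsum_le => z.
have HK : 0 <= INR (L * L) * (2 * exp (- beta * c)).
  apply: Rmult_le_pos; [exact: pos_INR | have := exp_pos (- beta * c); lra].
case Hz: (Sb z).
  case: (HS z Hz) => H1 H2; rewrite H1 Rmult_1_l.
  apply: Rle_trans (flux_le h Hb (fun w => proj1 (Hg w)) H1) _.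
  apply: Rmult_le_compat_l; first exact: pos_INR.
  apply: Rmult_le_compat_l; first lra.
  apply: exp_le; nra.
case: (eqVneq z p) => [->|Hzp]; first by rewrite Hp Rmult_0_l.
by rewrite (flux_harm HL (Hh z (negbT Hz) Hzp)) Rmult_0_r.
Qed.


Lemma spin_plus : spin s_plus = 1.
Proof. rewrite /spin /=; lra. Qed.
Lemma spin_zero : spin s_zero = 0.
Proof. rewrite /spin /=; lra. Qed.
Lemma spin_minus : spin s_minus = -1.
Proof. rewrite /spin /=; lra. Qed.

Lemma Ham_const h L c : Ham h (const_conf L c) = - h * INR (L * L) * spin c.
Proof.
rewrite /Ham.
have -> : \rsum_(x : site L) ((spin (const_conf L c (right_nb x)) - spin (const_conf L c x)) ^ 2 +
      (spin (const_conf L c (up_nb x)) - spin (const_conf L c x)) ^ 2) = \rsum_(x : site L) 0.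
  by apply: eq_bigr => x _; rewrite /const_conf !ffunE; ring.
have -> : \rsum_(x : site L) spin (const_conf L c x) = \rsum_(x : site L) spin c.
  by apply: eq_bigr => x _; rewrite /const_conf !ffunE.
rewrite !rsum_site_const; ring.
Qed.

Lemma Ham_plus h L : Ham h (plus_conf L) = - h * INR (L * L).
Proof. by rewrite /plus_conf Ham_const spin_plus; ring. Qed.
Lemma Ham_minus h L : Ham h (minus_conf L) = h * INR (L * L).
Proof. by rewrite /minus_conf Ham_const spin_minus; ring. Qed.

Lemma rsum_eq1 L (m : nat) : \rsum_(a : 'I_L) (if nat_of_ord a == m then 1 else 0) <= 1.
Proof.
case: (ltnP m L) => Hm.
  rewrite (bigD1 (Ordinal Hm)) //= eqxx big1; first lra.
  by move=> i Hi; case: eqP => // E; exfalso; move: Hi; rewrite -(inj_eq val_inj) /= E eqxx.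
rewrite big1; first lra.
by move=> i _; case: eqP => // E; exfalso; move: (ltn_ord i); rewrite E; lia.
Qed.

Lemma chg_count L (t : nat) :
  \rsum_(a : 'I_L) (if (nat_of_ord a < t)%N == (nat_of_ord (ordS a) < t)%N then 0 else 1) <= 2.
Proof.
apply: Rle_trans (rsum_le (G := fun a : 'I_L => (if nat_of_ord a == t.-1 then 1 else 0) + (if nat_of_ord a == L.-1 then 1 else 0)) _ _) _.
  move=> a; cbv beta; have Ha := ltn_ord a.
  have R1 : 0 <= (if nat_of_ord a == L.-1 then 1 else 0) by case: eqP => _; lra.
  have R2 : 0 <= (if nat_of_ord a == t.-1 then 1 else 0) by case: eqP => _; lra.
  have L1 : (if (nat_of_ord a < t)%N == (nat_of_ord (ordS a) < t)%N then 0 else 1) <= 1 by case: eqP => _; lra.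
  case: (eqVneq (nat_of_ord a) L.-1) => E2; first lra.
  case: (eqVneq (nat_of_ord a) t.-1) => E1; first lra.
  have Hs : (nat_of_ord (ordS a) = a.+1)%N by rewrite /= modn_small //; lia.
  have -> : (nat_of_ord a < t)%N = (nat_of_ord (ordS a) < t)%N by rewrite Hs; apply/idP/idP; lia.
  rewrite eqxx; lra.
rewrite rsum_plus; apply: Rle_trans (Rplus_le_compat _ _ _ _ (rsum_eq1 L t.-1) (rsum_eq1 L L.-1)) _; lra.
Qed.

Definition idx L (x : site L) : nat := (x.2 * L + x.1)%N.
Definition pathc L (k : nat) : conf L := [ffun x => if (idx x < k)%N then s_plus else s_zero].
Definition sel (u : bool) := if u then s_plus else s_zero.

Lemma pathcE L k x : pathc L k x = sel (idx x < k)%N.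
Proof. by rewrite /pathc ffunE. Qed.

Lemma sq_sel u v : (spin (sel v) - spin (sel u)) ^ 2 = if u == v then 0 else 1.
Proof. by case: u; case: v; rewrite /sel /= ?spin_plus ?spin_zero; lra. Qed.

Lemma rsum_site_pair L (F : site L -> R) :
  \rsum_(x : site L) F x = \rsum_(a : 'I_L) \rsum_(b : 'I_L) F (a, b).
Proof.
rewrite (@pair_bigA _ R0 Rplus _ _ (fun a b => F (a, b))).
by apply: eq_bigr => -[a b].
Qed.

Lemma pathc_ham h L k : 0 < h -> (0 < L)%N -> Ham h (pathc L k) <= 4 * INR L.
Proof.
move=> Hh HL.
rewrite /Ham.
have Hs : 0 <= \rsum_(x : site L) spin (pathc L k x).
  apply: rsum_ge0 => x; rewrite /pathc ffunE; case: ifP => _;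
    [rewrite spin_plus | rewrite spin_zero]; lra.
suff : \rsum_(x : site L)
     ((spin (pathc L k (right_nb x)) - spin (pathc L k x)) ^ 2 +
      (spin (pathc L k (up_nb x)) - spin (pathc L k x)) ^ 2) <= 4 * INR L by nra.
rewrite rsum_plus.
have -> : 4 * INR L = INR L * 2 + INR L * 2 by ring.
apply: Rplus_le_compat.
- rewrite rsum_site_pair exchange_big.
  have -> : INR L * 2 = \rsum_(b : 'I_L) 2 by rewrite rsum_const card_ord.
  apply: rsum_le => b.
  apply: Rle_trans (chg_count L (k - b * L)).
  apply: Req_le; apply: eq_bigr => a _.
  rewrite !pathcE sq_sel /idx /right_nb /=.
  have E : forall c : nat, (b * L + c < k)%N = (c < k - b * L)%N by move=> c; apply/idP/idP; lia.
  by rewrite !E.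
- rewrite rsum_site_pair.
  have -> : INR L * 2 = \rsum_(b : 'I_L) 2 by rewrite rsum_const card_ord.
  apply: rsum_le => a.
  apply: Rle_trans (chg_count L ((k - a + L - 1) %/ L)).
  apply: Req_le; apply: eq_bigr => b _.
  rewrite !pathcE sq_sel /idx /up_nb /=.
  have E : forall c : nat, (c * L + a < k)%N = (c < (k - a + L - 1) %/ L)%N.
    move=> c; rewrite -[(c < _)%N]/(c.+1 <= _)%N leq_divRL // mulSn; apply/idP/idP; lia.
  by rewrite !E.
Qed.


Lemma pathc0 L : pathc L 0 = zero_conf L.
Proof. by apply/ffunP => x; rewrite /pathc /zero_conf /const_conf !ffunE. Qed.

Lemma pathcN L : pathc L (L * L) = plus_conf L.
Proof.
apply/ffunP => -[a b]; rewrite /pathc /plus_conf /const_conf !ffunE /idx /=.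
have Ha := ltn_ord a; have Hb := ltn_ord b.
have -> : (b * L + a < L * L)%N; last by [].
have : (b.+1 * L <= L * L)%N by rewrite leq_mul2r Hb orbT.
rewrite mulSn.
lia.
Qed.

Lemma xk_subproof1 L (HL : (0 < L)%N) k : (k %% L < L)%N.
Proof. exact: ltn_pmod. Qed.

Lemma xk_subproof2 L k : (k < L * L)%N -> (k %/ L < L)%N.
Proof. move=> H; rewrite ltn_divLR; [exact: H | case: L H => //]. Qed.

Lemma pathcS L (HL : (0 < L)%N) k (Hk : (k < L * L)%N) :
  pathc L k.+1 = flip (pathc L k) (Ordinal (xk_subproof1 HL k), Ordinal (xk_subproof2 Hk)) true.
Proof.
apply/ffunP => -[a b]; rewrite /flip !ffunE.
have Hk2 := divn_eq k L.
case: eqP => [[Ea Eb]|Ne].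
  rewrite /idx Ea Eb /=.
  have -> : (k %/ L * L + k %% L = k)%N by lia.
  by rewrite ltnn ltnSn; apply: val_inj.
rewrite /idx /=.
have : (b * L + a != k)%N.
  apply/eqP => E; apply: Ne.
  have Ha := ltn_ord a.
  have E1 : (k %/ L = b)%N by rewrite -E divnMDl // divn_small // addn0.
  have E2 : (k %% L = a)%N by rewrite -E modnMDl modn_small.
  by congr pair; apply: val_inj.
move=> H; have -> : (b * L + a < k.+1)%N = (b * L + a < k)%N by apply/idP/idP; lia.
by [].
Qed.

Lemma telescope (psi : nat -> R) (d : R) N :
  (0 < N)%N -> (forall k, (k < N)%N -> psi k - psi k.+1 < d) -> psi 0%N - psi N < INR N * d.
Proof.
case: N => // N _ H.
elim: N H => [|N IH] H.
  by have := H 0%N isT; rewrite /=; lra.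
have H1 := IH (fun k Hk => H k (ltnW Hk)).
have H2 := H N.+1 (ltnSn _).
rewrite S_INR; lra.
Qed.

Lemma path_lower h beta L (HL : (0 < L)%N) (g : conf L -> R) :
  0 < h -> 0 <= beta -> g (plus_conf L) = 0 -> 0 <= g (zero_conf L) ->
  g (zero_conf L) ^ 2 <= INR (L * L) ^ 2 * exp (beta * (4 * INR L)) * Dir h beta g.
Proof.
move=> Hh Hb Hp H0.
have HN : (0 < L * L)%N by rewrite muln_gt0 HL.
have HNr : 0 < INR (L * L) by apply: lt_0_INR; apply/ltP.
pose psi k := g (pathc L k).
pose d := g (zero_conf L) / INR (L * L).
have [k [Hk Hd]] : exists k, (k < L * L)%N /\ d <= psi k - psi k.+1.
  apply: NNPP => Hn.
  have Hall : forall k, (k < L * L)%N -> psi k - psi k.+1 < d.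
    move=> k Hk; apply: Rnot_le_lt => Hle; apply: Hn; by exists k.
  have := telescope HN Hall.
  rewrite /psi pathc0 pathcN Hp /d => Ht.
  have : INR (L * L) * (g (zero_conf L) / INR (L * L)) = g (zero_conf L) by field; lra.
  lra.
have HD := Dir_ge_term h beta g (pathc L k) (Ordinal (xk_subproof1 HL k), Ordinal (xk_subproof2 Hk)) true.
rewrite -pathcS in HD.
have HC : exp (- beta * (4 * INR L)) <= Cd h beta (pathc L k) (pathc L k.+1).
  rewrite Cd_eq; apply: exp_le.
  have := @pathc_ham h L k Hh HL; have := @pathc_ham h L k.+1 Hh HL.
  rewrite /Rmax; case: Rle_dec => _; nra.
have Hd0 : 0 <= d by rewrite /d; apply: Rmult_le_pos; [lra | apply: Rlt_le; apply: Rinv_0_lt_compat; lra].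
have Hsq : d ^ 2 <= (psi k - psi k.+1) ^ 2 by apply: pow_incr; lra.
have Hpos : 0 <= (psi k - psi k.+1) ^ 2 by apply: pow2_ge_0.
have HE : exp (beta * (4 * INR L)) * exp (- beta * (4 * INR L)) = 1.
  by rewrite -exp_plus -exp_0; congr exp; ring.
have HEp := exp_pos (beta * (4 * INR L)).
have Hg : g (zero_conf L) = INR (L * L) * d by rewrite /d; field; lra.
rewrite Hg.
have H3 : exp (- beta * (4 * INR L)) * d ^ 2 <= Dir h beta g.
  apply: Rle_trans HD; rewrite /psi in Hsq.
  apply: Rmult_le_compat; [exact: Rlt_le (exp_pos _) | nra | exact: HC | exact: Hsq].
have H4 : d ^ 2 <= exp (beta * (4 * INR L)) * Dir h beta g.
  have := Rmult_le_compat_l _ _ _ (Rlt_le _ _ HEp) H3.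
  rewrite -Rmult_assoc HE; lra.
have : (INR (L * L) * d) ^ 2 = INR (L * L) ^ 2 * d ^ 2 by ring.
move=> ->.
rewrite Rmult_assoc; apply: Rmult_le_compat_l; [nra | exact: H4].
Qed.


Definition Sb h L (c : R) : pred (conf L) := fun s => if Rlt_dec c (Ham h s) then true else false.

Lemma SbP h L c (s : conf L) : Sb h c s = true <-> c < Ham h s.
Proof. by rewrite /Sb; case: Rlt_dec. Qed.

Definition phiS h beta L c := phi h beta (pred1 (plus_conf L)) (Sb h c).

Lemma phi0_sq h beta L (HL : (0 < L)%N) c :
  0 < h -> 0 <= beta -> - h * INR (L * L) <= c ->
  phiS h beta c (zero_conf L) ^ 2 <=
  4 * (INR (L * L) ^ 3 * (INR (3 ^ (L * L)) * exp (- beta * (c - 4 * INR L)))).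
Proof.
move=> Hh Hb Hc.
set g := phiS h beta c.
have Hgb : forall z, 0 <= g z <= 1 by move=> z; exact: phi_bounds.
have HnotS : ~~ Sb h c (plus_conf L).
  apply/negP => /SbP; rewrite Ham_plus; lra.
have Hgp : g (plus_conf L) = 0 by apply: phi_A => //=; rewrite eqxx.
have HU := @Dir_upper h beta L HL g (Sb h c) (plus_conf L) c Hb Hgb
  (fun z Hz => conj (phi_B h beta HL _ Hz) (proj1 (SbP h c z) Hz)) Hgp
  (fun z Hz Hzp => phi_harm h beta HL Hz (Hzp : ~~ (pred1 (plus_conf L) z))).
have HLo := path_lower HL Hh Hb Hgp (proj1 (Hgb (zero_conf L))).
apply: Rle_trans HLo _.
have HE : exp (beta * (4 * INR L)) * exp (- beta * c) = exp (- beta * (c - 4 * INR L)).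
  by rewrite -exp_plus; congr exp; ring.
have HN := pos_INR (L * L).
have H3 := pos_INR (3 ^ (L * L)).
have HEp := exp_pos (beta * (4 * INR L)).
have : INR (L * L) ^ 2 * exp (beta * (4 * INR L)) * Dir h beta g <=
       INR (L * L) ^ 2 * exp (beta * (4 * INR L)) *
       (2 * (INR (3 ^ (L * L)) * (INR (L * L) * (2 * exp (- beta * c))))).
  apply: Rmult_le_compat_l; last exact: HU.
  apply: Rmult_le_pos; [nra | lra].
move=> H; apply: Rle_trans H _; apply: Req_le; rewrite -HE; ring.
Qed.

Lemma INR_muln a b : INR (a * b)%N = INR a * INR b.
Proof. by rewrite -mult_INR. Qed.

Lemma INR_expn a b : INR (a ^ b)%N = INR a ^ b.
Proof. elim: b => [|b IH]; first by rewrite expn0 /=. by rewrite expnS INR_muln IH /=. Qed.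

Lemma nat_cube_le n : (n ^ 3 <= 8 ^ n)%N.
Proof.
have H : (n <= 2 ^ n)%N by apply: ltnW; apply: ltn_expl.
have -> : (8 ^ n = (2 ^ n) ^ 3)%N by rewrite -expnM mulnC expnM.
by rewrite leq_exp2r.
Qed.

Lemma pow_le_self x n : 0 <= x <= 1 -> (0 < n)%N -> x ^ n <= x.
Proof.
move=> Hx; case: n => // n _; elim: n => [|n IH] /=; first lra.
have : 0 <= x ^ n by apply: pow_le; lra.
simpl in IH; nra.
Qed.

Lemma phi0_small h beta L (HL : (0 < L)%N) (delta : R) :
  0 < h -> 0 <= beta -> 0 < delta ->
  24 * exp (- (beta * delta / 2)) <= 1 ->
  phiS h beta (4 * INR L + delta * INR (L * L) / 2) (zero_conf L) ^ 2 <=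
  96 * exp (- (beta * delta / 2)).
Proof.
move=> Hh Hb Hd Hsmall.
have HN := pos_INR (L * L).
have HL' : 0 < INR L by apply: lt_0_INR; apply/ltP.
have Hc : - h * INR (L * L) <= 4 * INR L + delta * INR (L * L) / 2 by nra.
apply: Rle_trans (phi0_sq HL Hh Hb Hc) _.
set x := exp (- (beta * delta / 2)).
have Hx : 0 < x by exact: exp_pos.
have E1 : exp (- beta * (4 * INR L + delta * INR (L * L) / 2 - 4 * INR L)) = x ^ (L * L).
  rewrite /x -exp_INR_mult; congr exp; lra.
rewrite E1 INR_expn.
have HNN : (0 < L * L)%N by rewrite muln_gt0 HL.
have Hcube : INR (L * L) ^ 3 <= 8 ^ (L * L).
  have := le_INR _ _ (leP (nat_cube_le (L * L))); rewrite !INR_expn.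
  have -> : INR 8 = 8 by rewrite /=; lra.
  have -> : INR (L * L) ^ 3 = INR (L * L) * (INR (L * L) * (INR (L * L) * 1)) by ring.
  by [].
have E3 : INR 3 = 3 by rewrite /=; lra.
rewrite E3.
have Hp : 0 <= 3 ^ (L * L) * x ^ (L * L) by apply: Rmult_le_pos; apply: pow_le; lra.
have H24 : (8 * (3 * x)) ^ (L * L) <= 8 * (3 * x).
  apply: pow_le_self => //; have : 24 * x <= 1 by exact: Hsmall. move=> ?; split; lra.
rewrite (Rpow_mult_distr 8 (3 * x)) (Rpow_mult_distr 3 x) in H24.
have := Rmult_le_compat_r _ _ _ Hp Hcube.
nra.
Qed.


Lemma const_neq L (HL : (0 < L)%N) (c c' : 'I_3) : c != c' -> const_conf L c != const_conf L c'.
Proof.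
move=> H; apply/eqP => E; move/eqP: H; apply.
by have := congr1 (fun f : conf L => f (site0 HL)) E; rewrite /const_conf !ffunE.
Qed.

Lemma mz L (HL : (0 < L)%N) : minus_conf L != zero_conf L. Proof. exact: const_neq. Qed.
Lemma mp L (HL : (0 < L)%N) : minus_conf L != plus_conf L. Proof. exact: const_neq. Qed.
Lemma zp L (HL : (0 < L)%N) : zero_conf L != plus_conf L. Proof. exact: const_neq. Qed.

Lemma reach_B_mono h beta L (HL : (0 < L)%N) (A B B' : pred (conf L)) n s :
  (forall z, B z -> B' z) -> reach h beta A B n s <= reach h beta A B' n s.
Proof.
move=> HB; elim: n s => [|n IH] s /=; first lra.
case Hs: (B s); first by rewrite (HB s Hs); lra.
case: (B' s); first by case: (A s); [lra | apply: J_le1 => // z; case: (reach_bounds h beta HL A B n z)].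
case: (A s); first lra.
exact: J_le.
Qed.

Lemma J_sub h beta L (HL : (0 < L)%N) (s : conf L) g :
  jump_avg h beta s (fun z => 1 - g z) = 1 - jump_avg h beta s g.
Proof.
have -> : (fun z => 1 - g z) = (fun z => (fun _ => 1) z + (-1) * g z).
  by apply: FunctionalExtensionality.functional_extensionality => z; ring.
rewrite J_plus J_scal J_const //; ring.
Qed.


Definition B2 L : pred (conf L) := fun s => (s == zero_conf L) || (s == plus_conf L).
Definition Bpm L : pred (conf L) := fun s => (s == minus_conf L) || (s == plus_conf L).
Definition Anone L : pred (conf L) := fun _ => false.
Arguments B2 : clear implicits.
Arguments Bpm : clear implicits.
Arguments Anone : clear implicits.

Lemma reach_SB h beta L (A B : pred (conf L)) n s : B s -> reach h beta A B n.+1 s = 1.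
Proof. by move=> H; rewrite /= H. Qed.
Lemma reach_SA h beta L (A B : pred (conf L)) n s : ~~ B s -> A s -> reach h beta A B n.+1 s = 0.
Proof. by move=> H1 H2; rewrite /= (negbTE H1) H2. Qed.
Lemma reach_SJ h beta L (A B : pred (conf L)) n s : ~~ B s -> ~~ A s ->
  reach h beta A B n.+1 s = jump_avg h beta s (reach h beta A B n).
Proof. by move=> H1 H2; rewrite /= (negbTE H1) (negbTE H2). Qed.
Lemma reach_0 h beta L (A B : pred (conf L)) s : reach h beta A B 0 s = 0.
Proof. by []. Qed.

Lemma key_b h beta L (HL : (0 < L)%N) M n s :
  reach h beta (pred1 (minus_conf L)) (B2 L) n s <=
  reach h beta (pred1 (minus_conf L)) (pred1 (plus_conf L)) (n + M) s +
  reach h beta (pred1 (minus_conf L)) (B2 L) n s *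
    (1 - reach h beta (pred1 (minus_conf L)) (pred1 (plus_conf L)) M (zero_conf L)).
Proof.
set A := pred1 (minus_conf L); set f := reach h beta A (pred1 (plus_conf L)).
have Hfb := fun k z => reach_bounds h beta HL A (pred1 (plus_conf L)) k z.
have [HfM HfM1] := Hfb M (zero_conf L).
elim: n s => [|n IH] s.
  rewrite reach_0 Rmult_0_l Rplus_0_r; by case: (Hfb (0 + M)%N s).
rewrite addSn.
case Hs: (B2 L s).
  rewrite reach_SB //.
  case/orP: Hs => /eqP ->.
    have HM : (M <= (n + M).+1)%N by lia.
    have := reach_mono_le h beta HL A (pred1 (plus_conf L)) (zero_conf L) HM.
    rewrite /f in HfM HfM1 *; lra.
  rewrite /f reach_SB; last by rewrite /= eqxx.
  rewrite /f in HfM HfM1; lra.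
have Hp : ~~ pred1 (plus_conf L) s by apply/negP => /= /eqP E; rewrite /B2 E eqxx orbT in Hs.
case HA: (A s).
  rewrite reach_SA ?Hs // Rmult_0_l Rplus_0_r; by case: (Hfb (n + M).+1 s).
rewrite reach_SJ ?Hs ?HA // /f reach_SJ ?HA //.
apply: Rle_trans (@J_le h beta L HL s _ (fun z => f (n + M)%N z +
   (1 - f M (zero_conf L)) * reach h beta A (B2 L) n z) _) _.
  move=> z; have := IH z; lra.
rewrite J_plus J_scal /f; lra.
Qed.

Lemma key_c h beta L (HL : (0 < L)%N) (S : pred (conf L)) n s :
  S (minus_conf L) -> ~~ S (plus_conf L) ->
  reach h beta (Anone L) (Bpm L) n s <=
  reach h beta (pred1 (minus_conf L)) (pred1 (plus_conf L)) n s +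
  reach h beta (pred1 (plus_conf L)) S n s.
Proof.
move=> Hm Hp.
set f := reach h beta (pred1 (minus_conf L)) (pred1 (plus_conf L)).
set psi := reach h beta (pred1 (plus_conf L)) S.
have Hfb := fun k z => reach_bounds h beta HL (pred1 (minus_conf L)) (pred1 (plus_conf L)) k z.
have Hpb := fun k z => reach_bounds h beta HL (pred1 (plus_conf L)) S k z.
have Hyb := fun k z => reach_bounds h beta HL (Anone L) (Bpm L) k z.
elim: n s => [|n IH] s.
  rewrite /f /psi !reach_0; lra.
case Hs: (Bpm L s).
  case/orP: Hs => /eqP ->.
    rewrite /psi (@reach_SB h beta L _ _ _ _ Hm).
    case: (Hyb n.+1 (minus_conf L)); case: (Hfb n.+1 (minus_conf L)); rewrite /f; lra.
  rewrite /f (@reach_SB h beta L _ _ _ _ (_ : pred1 (plus_conf L) (plus_conf L))); last by rewrite /= eqxx.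
  case: (Hyb n.+1 (plus_conf L)); case: (Hpb n.+1 (plus_conf L)); rewrite /psi; lra.
rewrite reach_SJ ?Hs //.
have Hnp : ~~ pred1 (plus_conf L) s by apply/negP => /= /eqP E; rewrite /Bpm E eqxx orbT in Hs.
have Hnm : ~~ pred1 (minus_conf L) s by apply/negP => /= /eqP E; rewrite /Bpm E eqxx in Hs.
case HS: (S s).
  rewrite /psi (@reach_SB h beta L _ _ _ _ HS).
  have := J_le1 h beta HL s (fun z => proj2 (Hyb n z)).
  case: (Hfb n.+1 s); rewrite /f; lra.
rewrite /f /psi !reach_SJ ?HS //.
apply: Rle_trans (@J_le h beta L HL s _ (fun z => f n z + psi n z) IH) _.
rewrite J_plus /f /psi; lra.
Qed.

Lemma key_d h beta L (HL : (0 < L)%N) (rho : R) N k s :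
  0 <= rho -> (forall z, 1 - reach h beta (Anone L) (Bpm L) N z <= rho) ->
  1 - reach h beta (Anone L) (Bpm L) (k + N) s <=
  (1 - reach h beta (Anone L) (Bpm L) k s) * rho.
Proof.
move=> Hr HN.
elim: k s => [|k IH] s.
  rewrite add0n reach_0; have := HN s; lra.
rewrite addSn.
case Hs: (Bpm L s).
  rewrite !reach_SB //; lra.
rewrite !reach_SJ ?Hs //.
rewrite -!J_sub //.
apply: Rle_trans (@J_le h beta L HL s _ (fun z => (1 - reach h beta (Anone L) (Bpm L) k z) * rho) IH) _.
rewrite (Rmult_comm _ rho) -J_scal.
apply: Req_le; congr jump_avg; apply: FunctionalExtensionality.functional_extensionality => z; ring.
Qed.


Definition Dist L (s : conf L) : nat := (\sum_(x : site L) (2 - s x))%N.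

Lemma Dist_flip L (s : conf L) x : (s x < 2)%N ->
  (0 < Dist s)%N /\ Dist (flip s x true) = (Dist s).-1.
Proof.
move=> Hx.
rewrite /Dist (bigD1 x (F := fun i => 2 - flip s x true i)%N) //= (bigD1 x (F := fun i => 2 - s i)%N) //=.
have -> : (\sum_(i | i != x) (2 - flip s x true i) = \sum_(i | i != x) (2 - s i))%N.
  by apply: eq_bigr => i Hi; rewrite /flip ffunE (negbTE Hi).
rewrite /flip ffunE eqxx /=.
have H3 := ltn_ord (s x).
have -> : ((s x).+1 %% 3 = (s x).+1)%N by rewrite modn_small //; lia.
split; lia.
Qed.

Lemma exists_nonplus L (s : conf L) : s != plus_conf L -> exists x, (s x < 2)%N.
Proof.
move=> Hs; apply: NNPP => Hn; move/eqP: Hs; apply.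
apply/ffunP => x; rewrite /plus_conf /const_conf ffunE.
apply: ord_inj => /=; have := ltn_ord (s x).
have : ~ (s x < 2)%N by move=> H; apply: Hn; exists x.
move=> H1 H2; have H3 : (2 <= s x)%N by rewrite leqNgt; apply/negP.
have G : forall n : nat, ~ (n < 2)%N -> (n < 3)%N -> n = 2%N by move=> n *; lia.
exact: G H1 H2.
Qed.

Lemma Dist_le L (s : conf L) : (Dist s <= 2 * (L * L))%N.
Proof.
rewrite /Dist; apply: (@leq_trans (\sum_(x : site L) 2)%N).
  by apply: leq_sum => i _; exact: leq_subr.
by rewrite sum_nat_const card_prod card_ord mulnC.
Qed.

Lemma reach_pos h beta L (HL : (0 < L)%N) (A B : pred (conf L)) :
  (forall s, A s -> s = minus_conf L) -> B (plus_conf L) ->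
  forall d s n, Dist s = d -> s != minus_conf L -> (d < n)%N -> 0 < reach h beta A B n s.
Proof.
move=> HA HB d; elim: d => [|d IH] s n Hd Hm Hn.
  case: n Hn => // n _.
  case: (eqVneq s (plus_conf L)) => [->|Hp]; first by rewrite reach_SB //; lra.
  case: (exists_nonplus Hp) => x Hx; case: (Dist_flip Hx) => H1 _; lia.
case: n Hn => // n Hn.
case HBs: (B s); first by rewrite reach_SB //; lra.
case HAs: (A s); first by move/HA: HAs => E; rewrite E eqxx in Hm.
rewrite reach_SJ ?HBs ?HAs //.
have Hp : s != plus_conf L by apply/eqP => E; rewrite E HB in HBs.
case: (exists_nonplus Hp) => x Hx.
case: (Dist_flip Hx) => H1 H2.
have Hz : flip s x true != minus_conf L.
  apply/eqP => E; have := congr1 (fun f : conf L => nat_of_ord (f x)) E.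
  rewrite /flip /minus_conf /const_conf !ffunE eqxx /= modn_small; [lia | ].
  have G : forall n : nat, (n < 2)%N -> (n.+1 < 3)%N by move=> n0; lia.
  exact: G Hx.
have Hr := IH (flip s x true) n ltac:(rewrite H2 Hd; lia) Hz ltac:(lia).
apply: Rlt_le_trans (J_ge_term h beta HL s x true (fun z => proj1 (reach_bounds h beta HL A B n z))).
apply: Rmult_lt_0_compat => //; exact: wt_pos.
Qed.


Lemma esc_cv h beta L (HL : (0 < L)%N) (A B : pred (conf L)) s :
  Un_cv (fun n => jump_avg h beta s (reach h beta A B n)) (escape h beta A B s).
Proof.
rewrite /escape; apply: (@grow_cv _ 1) => n.
  apply: J_le => // z; exact: reach_mono.
apply: J_le1 => // z; by case: (reach_bounds h beta HL A B n z).
Qed.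

Lemma esc_ge h beta L (HL : (0 < L)%N) (A B : pred (conf L)) s n :
  jump_avg h beta s (reach h beta A B n) <= escape h beta A B s.
Proof.
apply: (@growing_ineq (fun n => jump_avg h beta s (reach h beta A B n))); last exact: esc_cv.
move=> k; apply: J_le => // z; exact: reach_mono.
Qed.

Lemma min_list (T : eqType) (r : seq T) (F : T -> R) z :
  z \in r -> \big[Rmin/1]_(i <- r) F i <= F z.
Proof.
elim: r => [//|a r IH]; rewrite in_cons big_cons => /orP [/eqP ->|Hz].
  exact: Rmin_l.
apply: Rle_trans (Rmin_r _ _) (IH Hz).
Qed.

Lemma min_pos (T : Type) (r : seq T) (F : T -> R) :
  (forall i, 0 < F i) -> 0 < \big[Rmin/1]_(i <- r) F i.
Proof.
move=> H; elim: r => [|a r IH]; rewrite ?big_nil ?big_cons; first lra.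
by apply: Rmin_glb_lt.
Qed.

Lemma decay h beta L (HL : (0 < L)%N) eps : 0 < eps ->
  exists M, 1 - reach h beta (Anone L) (Bpm L) M (zero_conf L) < eps.
Proof.
move=> He.
set y := reach h beta (Anone L) (Bpm L).
set N := (2 * (L * L)).+1.
have Hpos : forall z, 0 < y N z.
  move=> z; case: (eqVneq z (minus_conf L)) => [->|Hz].
    rewrite /y /N reach_SB; [lra | by rewrite /Bpm eqxx].
  apply: (@reach_pos h beta L HL (Anone L) (Bpm L) _ _ (Dist z)) => //.
    by rewrite /Bpm eqxx orbT.
  rewrite /N; have := Dist_le z; lia.
set m := \big[Rmin/1]_(i <- index_enum (conf L)) y N i.
have Hm0 : 0 < m by apply: min_pos.
have Hm1 : forall z, m <= y N z by move=> z; apply: min_list; rewrite mem_index_enum.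
have Hy1 : forall k z, y k z <= 1 by move=> k z; case: (reach_bounds h beta HL (Anone L) (Bpm L) k z).
set rho := 1 - m.
have Hr0 : 0 <= rho by have := Hm1 (zero_conf L); have := Hy1 N (zero_conf L); rewrite /rho; lra.
have Hr1 : rho < 1 by rewrite /rho; lra.
have Hdec : forall k, 1 - y (k * N)%N (zero_conf L) <= rho ^ k.
  elim=> [|k IH]; first by rewrite mul0n /y reach_0 /=; lra.
  rewrite mulSn addnC.
  apply: Rle_trans (@key_d h beta L HL rho N (k * N) (zero_conf L) Hr0 _) _.
    by move=> z; have := Hm1 z; rewrite /rho /y; lra.
  rewrite /= Rmult_comm; apply: Rmult_le_compat_l => //.
have [K HK] := pow_lt_1_zero rho ltac:(rewrite Rabs_pos_eq //) eps He.
exists (K * N)%N.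
apply: Rle_lt_trans (Hdec K) _.
have := HK K (le_n K); rewrite Rabs_pos_eq //; last by apply: pow_le.
Qed.

Lemma fixed_bound h beta L (HL : (0 < L)%N) c :
  0 < h -> 0 < beta -> - h * INR (L * L) <= c -> c < h * INR (L * L) ->
  0 < escape h beta (pred1 (minus_conf L)) (B2 L) (minus_conf L) /\
  escape h beta (pred1 (minus_conf L)) (pred1 (plus_conf L)) (minus_conf L) <=
    escape h beta (pred1 (minus_conf L)) (B2 L) (minus_conf L) /\
  (1 - phiS h beta c (zero_conf L)) * escape h beta (pred1 (minus_conf L)) (B2 L) (minus_conf L) <=
    escape h beta (pred1 (minus_conf L)) (pred1 (plus_conf L)) (minus_conf L).
Proof.
move=> Hh Hb Hc1 Hc2.
set A := pred1 (minus_conf L).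
set e1 := escape h beta A (pred1 (plus_conf L)) (minus_conf L).
set e2 := escape h beta A (B2 L) (minus_conf L).
set f := reach h beta A (pred1 (plus_conf L)).
set g := reach h beta A (B2 L).
have Hf := fun k z => reach_bounds h beta HL A (pred1 (plus_conf L)) k z.
have Hg := fun k z => reach_bounds h beta HL A (B2 L) k z.
have He2 : 0 < e2.
  set x0 := site0 HL.
  set eta := flip (minus_conf L) x0 true.
  have Hneq : eta != minus_conf L.
    apply/eqP => E; have := congr1 (fun f : conf L => nat_of_ord (f x0)) E.
    by rewrite /eta /flip /minus_conf /const_conf !ffunE eqxx.
  have Hp := @reach_pos h beta L HL A (B2 L) (fun s Hs => eqP Hs)
     ltac:(by rewrite /B2 eqxx orbT) (Dist eta) eta (Dist eta).+1 erefl Hneq (ltnSn _).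
  have := J_ge_term h beta HL (minus_conf L) x0 true (fun z => proj1 (Hg (Dist eta).+1 z)).
  have := wt_pos h beta HL (minus_conf L) x0 true.
  have := esc_ge h beta HL A (B2 L) (minus_conf L) (Dist eta).+1.
  rewrite -/e2 -/eta => H1 H2 H3.
  apply: Rlt_le_trans H1; apply: Rlt_le_trans H3; exact: Rmult_lt_0_compat.
split => //.
have He12 : e1 <= e2.
  apply: (@Rle_cv_lim (fun n => jump_avg h beta (minus_conf L) (f n))
                      (fun n => jump_avg h beta (minus_conf L) (g n))).
  - move=> n; apply: J_le => // z; apply: reach_B_mono => // w /= /eqP ->.
    by rewrite /B2 eqxx orbT.
  - exact: esc_cv.
  - exact: esc_cv.
split => //.
set phi0 := phiS h beta c (zero_conf L).
have HSm : Sb h c (minus_conf L) by apply/SbP; rewrite Ham_minus.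
have HSp : ~~ Sb h c (plus_conf L) by apply/negP => /SbP; rewrite Ham_plus; lra.
have Hstep : forall M, e2 <= e1 + (phi0 + (1 - reach h beta (Anone L) (Bpm L) M (zero_conf L))) * e2.
  move=> M.
  have Hc' : 1 - f M (zero_conf L) <= phi0 + (1 - reach h beta (Anone L) (Bpm L) M (zero_conf L)).
    have := key_c h beta HL M (zero_conf L) HSm HSp.
    have := phi_ge h beta HL (pred1 (plus_conf L)) (Sb h c) M (zero_conf L).
    rewrite /f /A /phi0 /phiS; lra.
  have Hc0 : 0 <= 1 - f M (zero_conf L) by rewrite /f; case: (Hf M (zero_conf L)); lra.
  have He20 : 0 <= e2 by lra.
  apply: Rle_trans (Rplus_le_compat_l _ _ _ (Rmult_le_compat_r _ _ _ He20 Hc')).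
  apply: (cv_le_bound (esc_cv h beta HL A (B2 L) (minus_conf L))) => n.
  have HJ := @J_le h beta L HL (minus_conf L) (g n)
     (fun z => f (n + M)%N z + (1 - f M (zero_conf L)) * g n z)
     (fun z => ltac:(have := key_b h beta HL M n z; rewrite -/A -/f -/g; lra)).
  rewrite J_plus J_scal in HJ.
  have := esc_ge h beta HL A (pred1 (plus_conf L)) (minus_conf L) (n + M).
  have := esc_ge h beta HL A (B2 L) (minus_conf L) n.
  rewrite -/e1 -/e2 -/f -/g => H1 H2.
  have := Rmult_le_compat_l _ _ _ Hc0 H1.
  lra.
apply: NNPP => Hn; have Hlt := Rnot_le_lt _ _ Hn.
set gap := (1 - phi0) * e2 - e1.
have Hgap : 0 < gap by rewrite /gap; lra.
have [M HM] := decay h beta HL (eps := gap / (2 * e2)) ltac:(apply: Rdiv_lt_0_compat; lra).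
have := Hstep M.
set tau := 1 - reach h beta (Anone L) (Bpm L) M (zero_conf L).
move=> H.
have : tau * e2 < gap / 2.
  have -> : gap / 2 = gap / (2 * e2) * e2 by field; lra.
  by apply: Rmult_lt_compat_r.
rewrite /gap in Hgap *; lra.
Qed.


Lemma INR_addn a b : INR (a + b)%N = INR a + INR b.
Proof. by rewrite -plus_INR. Qed.

Lemma Zpart_pos h beta L : 0 < Zpart h beta L.
Proof.
rewrite /Zpart.
exact: (Rlt_le_trans _ _ _ (exp_pos (- beta * Ham h (minus_conf L)))
   (@rsum_ge_term _ (fun s => exp (- beta * Ham h s)) (minus_conf L) (fun s => Rlt_le _ _ (exp_pos _)))).
Qed.

Lemma cap_single h beta L (B : pred (conf L)) :
  cap h beta (pred1 (minus_conf L)) B =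
  mu h beta (minus_conf L) * lam h beta (minus_conf L) *
  escape h beta (pred1 (minus_conf L)) B (minus_conf L).
Proof. by rewrite /cap (big_pred1 (minus_conf L)). Qed.

Unset Implicit Arguments. Set Strict Implicit.

Theorem lemma7p4 (h : R) (n0 : nat) (L : R -> nat) :
  0 < h < 1 ->
  INR n0 <= 2 / h < INR n0 + 1 ->
  (forall k : nat, 2 / h <> INR k) ->
  (forall beta, 0 < beta -> (n0 * (n0 + 1) + 2 <= L beta)%N) ->
  lim_infty (fun beta => sqrt (INR (L beta * L beta)%N) *
              (exp (- (((INR n0 + 1) * h - 2) * beta)) + exp (- (h * beta)))) 0 ->
  lim_infty (fun beta => (INR (L beta * L beta)%N) ^ 2 * exp (- ((2 - h) * beta))) 0 ->
  lim_infty (fun beta =>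
      cap h beta (pred1 (minus_conf (L beta))) (pred1 (plus_conf (L beta)))
      / cap h beta (pred1 (minus_conf (L beta)))
                   (fun s => (s == zero_conf (L beta)) || (s == plus_conf (L beta))))
    1.
Proof.
move=> [Hh0 Hh1] [Hn1 Hn2] _ HLb _ _ eps Heps.
set K := (n0 * (n0 + 1) + 2)%N.
have HKr : INR K = INR n0 * (INR n0 + 1) + 2.
  by rewrite /K INR_addn INR_muln INR_addn /=.
have H2h : 2 < 2 / h.
  apply: (Rmult_lt_reg_r h) => //; rewrite /Rdiv Rmult_assoc Rinv_l; lra.
have Hn0 : 2 <= INR n0.
  have : (1 < n0)%N.
    case: (ltnP 1 n0) => // H.
    have := le_INR _ _ (leP H); rewrite /=; lra.
  move=> H; have := le_INR _ _ (leP H); rewrite /=; lra.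
have Hhn : 2 < h * (INR n0 + 1).
  have := Rmult_lt_compat_l h _ _ Hh0 Hn2.
  rewrite /Rdiv -Rmult_assoc (Rmult_comm h 2) Rmult_assoc Rinv_r; lra.
have HKpos : 0 < INR K by rewrite HKr; nra.
have HhK : 4 < h * INR K by rewrite HKr; nra.
set delta := h - 4 / INR K.
have Hdelta : 0 < delta.
  rewrite /delta; apply: Rlt_Rminus.
  apply: (Rmult_lt_reg_r (INR K)) => //; rewrite /Rdiv Rmult_assoc Rinv_l; lra.
set t := Rmin (eps ^ 2 / 96) (1 / 24).
have Ht0 : 0 < t by apply: Rmin_glb_lt; [apply: Rdiv_lt_0_compat; [apply: pow_lt|]|]; lra.
exists (Rmax 1 (2 / delta * (- ln t))) => beta Hbeta.
have Hb1 : 1 < beta by apply: Rle_lt_trans (Rmax_l _ _) Hbeta.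
have Hb0 : 0 < beta by lra.
have Hexp : exp (- (beta * delta / 2)) < t.
  rewrite -(exp_ln t Ht0); apply: exp_increasing.
  have := Rle_lt_trans _ _ _ (Rmax_r 1 (2 / delta * (- ln t))) Hbeta.
  move=> H; have := Rmult_lt_compat_l (delta / 2) _ _ ltac:(lra) H.
  have -> : delta / 2 * (2 / delta * - ln t) = - ln t by field; lra.
  lra.
have Ht1 : t <= 1 / 24 by exact: Rmin_r.
have Ht2 : t <= eps ^ 2 / 96 by exact: Rmin_l.
set Lb := L beta.
have HLK := HLb beta Hb0.
have HL : (0 < Lb)%N by rewrite /Lb; lia.
have HLr : INR K <= INR Lb by apply: le_INR; apply/leP.
set c := 4 * INR Lb + delta * INR (Lb * Lb) / 2.
have HN : INR (Lb * Lb) = INR Lb * INR Lb by rewrite INR_muln.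
have HLpos : 0 < INR Lb by lra.
have Hc1 : - h * INR (Lb * Lb) <= c.
  rewrite /c HN; have : 0 <= delta * (INR Lb * INR Lb) by nra. nra.
have Hc2 : c < h * INR (Lb * Lb).
  rewrite /c HN.
  have E : h * (INR Lb * INR Lb) - 4 * INR Lb - delta * (INR Lb * INR Lb)
           = 4 * INR Lb * (INR Lb - INR K) / INR K.
    by rewrite /delta; field; lra.
  have : 0 <= 4 * INR Lb * (INR Lb - INR K) / INR K.
    apply: Rmult_le_pos; last by apply: Rlt_le; apply: Rinv_0_lt_compat.
    nra.
  have : 0 < delta * (INR Lb * INR Lb) by apply: Rmult_lt_0_compat => //; apply: Rmult_lt_0_compat.
  lra.
have [He2 [He12 Hmain]] := @fixed_bound h beta Lb HL c Hh0 Hb0 Hc1 Hc2.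
have Hphi := @phi0_small h beta Lb HL delta Hh0 (Rlt_le _ _ Hb0) Hdelta ltac:(lra).
rewrite -/c in Hphi.
have Hphi0 := proj1 (phi_bounds h beta HL (pred1 (plus_conf Lb)) (Sb h c) (zero_conf Lb)).
have Hphi_eps : phiS h beta c (zero_conf Lb) < eps.
  rewrite /phiS in Hphi *.
  have : phi h beta (pred1 (plus_conf Lb)) (Sb h c) (zero_conf Lb) ^ 2 < eps ^ 2 by lra.
  move=> H; apply: Rnot_le_lt => Hle.
  have : eps ^ 2 <= phi h beta (pred1 (plus_conf Lb)) (Sb h c) (zero_conf Lb) ^ 2.
    by apply: pow_incr; lra.
  lra.
rewrite -/Lb !cap_single.
have Hmu : 0 < mu h beta (minus_conf Lb) * lam h beta (minus_conf Lb).
  apply: Rmult_lt_0_compat; last exact: lam_pos.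
  rewrite /mu; apply: Rdiv_lt_0_compat; [exact: exp_pos | exact: Zpart_pos].
set m := mu h beta (minus_conf Lb) * lam h beta (minus_conf Lb).
set e1 := escape h beta (pred1 (minus_conf Lb)) (pred1 (plus_conf Lb)) (minus_conf Lb).
set e2 := escape h beta (pred1 (minus_conf Lb))
            (fun s => (s == zero_conf Lb) || (s == plus_conf Lb)) (minus_conf Lb).
have He2' : escape h beta (pred1 (minus_conf Lb)) (B2 Lb) (minus_conf Lb) = e2 by [].
rewrite He2' in He2 He12 Hmain.
have Hm : 0 < m := Hmu.
rewrite -/e1 in He12 Hmain.
have -> : m * e1 / (m * e2) = e1 / e2 by field; lra.
have Hr1 : e1 / e2 <= 1.
  apply: (Rmult_le_reg_r e2) => //; rewrite /Rdiv Rmult_assoc Rinv_l; lra.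
have Hr2 : 1 - phiS h beta c (zero_conf Lb) <= e1 / e2.
  apply: (Rmult_le_reg_r e2) => //; rewrite /Rdiv Rmult_assoc Rinv_l; lra.
apply: Rabs_def1; lra.
Qed.
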